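(* Let $I$ be a monomial ideal of $R=K[x_1,\ldots,x_d]$ ($K$ a field) and let $r,s\in\mathbb{R}$, $r,s\ge0$. Then (1) if $s\ge r\ge0$, then $\overline{I^s}\subseteq\overline{I^r}$; (2) $\overline{I^s}\cdot\overline{I^r}\subseteq\overline{I^{s+r}}$.
   Context: $\mathbb{N}$ denotes the non-negative integers and $\mathbf{x}^{\mathbf{a}}=x_1^{a_1}\cdots x_d^{a_d}$. $NP(I)$ is the convex hull in $\mathbb{R}^d$ of $\{\mathbf{a}\in\mathbb{N}^d\mid \mathbf{x}^{\mathbf{a}}\in I\}$. For real $t\ge0$, the $t$-th real power of $I$ is $\overline{I^t}=(\{\mathbf{x}^{\mathbf{a}}\mid \mathbf{a}\in t\cdot NP(I)\cap\mathbb{N}^d\})$, where $t\cdot NP(I)=\{t\mathbf{v}\mid\mathbf{v}\in NP(I)\}$. *)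

(* Defs.v *)
From mathcomp Require Import all_boot all_algebra.
From mathcomp Require Import reals.
From mathcomp Require Import mpoly.
Set Implicit Arguments. Unset Strict Implicit. Unset Printing Implicit Defensive.
Import GRing.Theory Num.Theory.
Local Open Scope ring_scope.

Definition ideal_gen (P : comNzRingType) (G : P -> Prop) (p : P) : Prop :=
  exists (n : nat) (c g : 'I_n -> P),
    (forall k, G (g k)) /\ p = \sum_(k < n) c k * g k.

Definition is_monomial_ideal (K : fieldType) (d : nat)
    (I : {mpoly K[d]} -> Prop) : Prop :=
  exists G : 'X_{1..d} -> Prop,
    forall p, I p <-> ideal_gen (fun q => exists m, G m /\ q = 'X_[m]) p.

Definition expvec (R : realType) (d : nat) (m : 'X_{1..d}) : 'I_d -> R :=
  fun i => (m i)%:R.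

Definition conv_hull (R : realType) (d : nat) (S : ('I_d -> R) -> Prop)
    (v : 'I_d -> R) : Prop :=
  exists (n : nat) (pts : 'I_n -> 'I_d -> R) (w : 'I_n -> R),
    (forall k, S (pts k)) /\ (forall k, 0 <= w k) /\
    \sum_(k < n) w k = 1 /\
    (forall i, v i = \sum_(k < n) w k * pts k i).

Definition NP (R : realType) (K : fieldType) (d : nat)
    (I : {mpoly K[d]} -> Prop) : ('I_d -> R) -> Prop :=
  conv_hull (fun v => exists m : 'X_{1..d}, I 'X_[m] /\ v = expvec R m).

Definition real_pow (R : realType) (K : fieldType) (d : nat)
    (I : {mpoly K[d]} -> Prop) (t : R) : {mpoly K[d]} -> Prop :=
  ideal_gen (fun q => exists m : 'X_{1..d},
    (exists v, @NP R K d I v /\ forall i, expvec R m i = t * v i) /\ q = 'X_[m]).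

Definition ideal_mul (K : fieldType) (d : nat) (I J : {mpoly K[d]} -> Prop)
    : {mpoly K[d]} -> Prop :=
  ideal_gen (fun q => exists f g, I f /\ J g /\ q = f * g).

(* Main.v *)
Require Import Defs.
From mathcomp Require Import all_boot all_algebra.
From mathcomp Require Import reals.
From mathcomp Require Import mpoly.
From mathcomp Require Import ring lra.
From Stdlib Require Import FunctionalExtensionality.
Import GRing.Theory Num.Theory.
Import order.Order.TTheory.
Local Open Scope ring_scope.

Definition cat_fun {T : Type} {n m : nat} (f : 'I_n -> T) (g : 'I_m -> T)
  (k : 'I_(n + m)) : T :=
  match split k with inl j => f j | inr j => g j end.

Lemma cat_l {T : Type} {n m : nat} (f : 'I_n -> T) (g : 'I_m -> T) j :
  cat_fun f g (lshift m j) = f j.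
Proof.
rewrite /cat_fun.
have -> : split (lshift m j) = inl j by exact: (unsplitK (inl _ j)).
by [].
Qed.

Lemma cat_r {T : Type} {n m : nat} (f : 'I_n -> T) (g : 'I_m -> T) j :
  cat_fun f g (rshift n j) = g j.
Proof.
rewrite /cat_fun.
have -> : split (rshift n j) = inr j by exact: (unsplitK (inr _ j)).
by [].
Qed.

Section IG.
Variable P : comNzRingType.

Lemma ig0 (G : P -> Prop) : ideal_gen G 0.
Proof.
exists 0%N, (fun _ => 0), (fun _ => 0); split; last by rewrite big_ord0.
by move=> [m hm]; move: hm; rewrite ltn0.
Qed.

Lemma ig_gen (G : P -> Prop) g : G g -> ideal_gen G g.
Proof.
move=> hg; exists 1%N, (fun _ => 1), (fun _ => g); split => //.
by rewrite big_ord1 mul1r.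
Qed.

Lemma ig_add (G : P -> Prop) p q : ideal_gen G p -> ideal_gen G q ->
  ideal_gen G (p + q).
Proof.
move=> [n [c [g [hg ->]]]] [n' [c' [g' [hg' ->]]]].
exists (n + n')%N, (cat_fun c c'), (cat_fun g g'); split.
  by move=> k; rewrite /cat_fun; case: split.
rewrite big_split_ord /=; congr (_ + _); apply: eq_bigr => k _;
  by rewrite ?cat_l ?cat_r.
Qed.

Lemma ig_mull (G : P -> Prop) a p : ideal_gen G p -> ideal_gen G (a * p).
Proof.
move=> [n [c [g [hg ->]]]].
exists n, (fun k => a * c k), g; split => //.
by rewrite mulr_sumr; apply: eq_bigr => k _; rewrite mulrA.
Qed.

Lemma ig_sum (G : P -> Prop) n (c x : 'I_n -> P) :
  (forall k, ideal_gen G (x k)) -> ideal_gen G (\sum_(k < n) c k * x k).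
Proof.
elim: n c x => [|n IH] c x hx; first by rewrite big_ord0; exact: ig0.
rewrite big_ord_recr /=; apply: ig_add.
  by apply: IH => k; apply: hx.
by apply: ig_mull; apply: hx.
Qed.

Lemma ig_sub (G G' : P -> Prop) p : (forall g, G g -> ideal_gen G' g) ->
  ideal_gen G p -> ideal_gen G' p.
Proof.
move=> hG [n [c [g [hg ->]]]]; apply: ig_sum => k; exact: hG.
Qed.

Lemma ig_prod (G1 G2 G : P -> Prop) f g :
  (forall a b, G1 a -> G2 b -> ideal_gen G (a * b)) ->
  ideal_gen G1 f -> ideal_gen G2 g -> ideal_gen G (f * g).
Proof.
move=> hab [n [c [a [ha ->]]]] [n' [c' [b [hb ->]]]].
rewrite mulr_suml.
have -> : \sum_(i < n) c i * a i * (\sum_(k < n') c' k * b k) =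
  \sum_(i < n) c i * (a i * (\sum_(k < n') c' k * b k)).
  by apply: eq_bigr => i _; rewrite mulrA.
apply: ig_sum => i; rewrite mulr_sumr.
have -> : \sum_(k < n') a i * (c' k * b k) = \sum_(k < n') c' k * (a i * b k).
  by apply: eq_bigr => k _; rewrite mulrCA.
apply: ig_sum => k; exact: hab.
Qed.
End IG.

Section Conv.
Variables (R : realType) (d : nat) (S : ('I_d -> R) -> Prop).

Lemma conv_ext u v : conv_hull S u -> (forall i, v i = u i) -> conv_hull S v.
Proof.
move=> [n [pts [w [h1 [h2 [h3 h4]]]]]] e.
exists n, pts, w; do 3 (split => //); by move=> i; rewrite e h4.
Qed.

Lemma conv_comb u v l : conv_hull S u -> conv_hull S v -> 0 <= l -> l <= 1 ->
  conv_hull S (fun i => l * u i + (1 - l) * v i).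
Proof.
move=> [n [pts [w [h1 [h2 [h3 h4]]]]]] [n' [pts' [w' [h1' [h2' [h3' h4']]]]]] l0 l1.
exists (n + n')%N, (cat_fun pts pts'),
  (cat_fun (fun k => l * w k) (fun k => (1 - l) * w' k)); split.
  by move=> k; rewrite /cat_fun; case: split.
split.
  move=> k; rewrite /cat_fun; case: split => j; apply: mulr_ge0 => //.
  by rewrite subr_ge0.
split.
  rewrite big_split_ord /=.
  under eq_bigr do rewrite cat_l.
  under [X in _ + X]eq_bigr do rewrite cat_r.
  by rewrite -!mulr_sumr h3 h3'; lra.
move=> i; rewrite big_split_ord /=.
under eq_bigr do rewrite !cat_l.
under [X in _ = _ + X]eq_bigr do rewrite !cat_r.
by rewrite h4 h4' !mulr_sumr; congr (_ + _); apply: eq_bigr => k _; rewrite mulrA.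
Qed.

Lemma conv_translate u e : (forall v, S v -> S (fun i => v i + e i)) ->
  conv_hull S u -> conv_hull S (fun i => u i + e i).
Proof.
move=> hS [n [pts [w [h1 [h2 [h3 h4]]]]]].
exists n, (fun k i => pts k i + e i), w; split.
  by move=> k; apply: hS.
split => //; split => //.
move=> i; under eq_bigr do rewrite mulrDr.
by rewrite big_split /= -mulr_suml h3 mul1r h4.
Qed.

Lemma conv_nonneg u i : (forall v, S v -> forall i, 0 <= v i) ->
  conv_hull S u -> 0 <= u i.
Proof.
move=> hS [n [pts [w [h1 [h2 [h3 h4]]]]]].
rewrite h4; apply: sumr_ge0 => k _; apply: mulr_ge0 => //; exact: hS.
Qed.
End Conv.

Section NPsec.
Variables (R : realType) (K : fieldType) (d : nat) (I : {mpoly K[d]} -> Prop).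
Hypothesis Iup : forall m m0, I 'X_[m] -> I 'X_[(m + m0)%MM].

Lemma expvecD (m m' : 'X_{1..d}) i : expvec R (m + m')%MM i = expvec R m i + expvec R m' i.
Proof. by rewrite /expvec mnmDE natrD. Qed.

Lemma NP_nonneg v i : @NP R K d I v -> 0 <= v i.
Proof.
rewrite /NP; apply: conv_nonneg => u [m [_ ->]] j; exact: ler0n.
Qed.

Lemma NP_shift u (m0 : 'X_{1..d}) : @NP R K d I u ->
  @NP R K d I (fun i => u i + expvec R m0 i).
Proof.
rewrite /NP; apply: conv_translate => v [m [hm ->]].
exists (m + m0)%MM; split; first exact: Iup.
by apply: functional_extensionality => i; rewrite expvecD.
Qed.

Lemma NP_up1 u t (i0 : 'I_d) : @NP R K d I u -> 0 <= t ->
  @NP R K d I (fun i => u i + (if i == i0 then t else 0)).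
Proof.
move=> hu ht.
pose N := (Num.Def.archi_bound t).+1.
have tN : t < N%:R.
  have h1 := archi_boundP ht.
  have h2 : (Num.Def.archi_bound t)%:R <= (N%:R : R) by rewrite ler_nat /N.
  lra.
have N0 : 0 < (N%:R : R) by rewrite ltr0n.
pose m0 := (U_(i0) *+ N)%MM.
have := @conv_comb R d _ _ _ (t / N%:R) (NP_shift u m0 hu) hu (divr_ge0 ht (ltW N0)).
rewrite ler_pdivrMr // mul1r => /(_ (ltW tN)) hc.
eapply conv_ext; [exact hc|] => i.
rewrite /m0 /expvec mulmnE mnm1E.
case: eqP => [->|ne]; first rewrite eqxx.
  rewrite mul1n; field; lra.
have -> : (i0 == i) = false by apply/eqP => e; apply: ne.
rewrite mul0n; lra.
Qed.

Lemma NP_up u w : @NP R K d I u -> (forall i, 0 <= w i) ->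
  @NP R K d I (fun i => u i + w i).
Proof.
move=> hu hw.
suff H : forall k, (k <= d)%N ->
  @NP R K d I (fun i : 'I_d => u i + (if (i < k)%N then w i else 0)).
  by eapply conv_ext; [exact (H d (leqnn d))|] => i /=; rewrite ltn_ord.
elim => [|k IH] hk.
  by eapply conv_ext; [exact hu|] => i; rewrite addr0.
have hk' : (k < d)%N by [].
have := @NP_up1 _ _ (Ordinal hk') (IH (ltnW hk)) (hw (Ordinal hk')).
move=> hc; eapply conv_ext; [exact hc|] => i /=.
rewrite -addrA; congr (_ + _).
case: (ltngtP i k) => c.
- have -> : (i < k.+1)%N by apply: ltnW.
  have -> : (i == Ordinal hk') = false.
    by apply/eqP => e; move: c; rewrite e /= ltnn.
  by rewrite addr0.
- have -> : (i < k.+1)%N = false by apply/negbTE; rewrite -leqNgt.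
  have -> : (i == Ordinal hk') = false.
    by apply/eqP => e; move: c; rewrite e /= ltnn.
  by rewrite addr0.
- have -> : (i == Ordinal hk') by apply/eqP/val_inj.
  rewrite c ltnSn add0r.
  by congr w; apply/val_inj.
Qed.
End NPsec.

Theorem lemma5p1 (R : realType) (K : fieldType) (d : nat)
  (I : {mpoly K[d]} -> Prop) (HI : is_monomial_ideal I) (r s : R)
  (hr : 0 <= r) (hs : 0 <= s) :
  (r <= s -> forall p, @real_pow R K d I s p -> @real_pow R K d I r p) /\
  (forall p, ideal_mul (@real_pow R K d I s) (@real_pow R K d I r) p ->
             @real_pow R K d I (s + r) p).
Proof.
have Iup : forall m m0, I 'X_[m] -> I 'X_[(m + m0)%MM].
  move: HI => [G hG] m m0 hm.
  rewrite mpolyXD mulrC; apply/hG; apply: ig_mull; exact/hG.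
split.
  move=> rs p hp; apply: ig_sub hp => g [m [[v [hv hm]] ->]].
  move: hr; rewrite le_eqVlt => /orP [/eqP r0 | rpos].
    rewrite -[X in ideal_gen _ X]mulr1 -mpolyX0; apply: ig_mull; apply: ig_gen.
    exists 0%MM; split => //; exists v; split => // i.
    by rewrite /expvec mnm0E -r0 mul0r.
  apply: ig_gen; exists m; split => //.
  exists (fun i => v i + (s / r - 1) * v i); split.
    apply: NP_up => // i; apply: mulr_ge0; last exact: NP_nonneg hv.
    by rewrite subr_ge0 ler_pdivlMr // mul1r.
  move=> i; rewrite hm; field; lra.
move=> p hp; apply: ig_sub hp => q [f [g [hf [hg ->]]]].
apply: ig_prod hf hg => a b [m [[v [hv hm]] ->]] [m' [[v' [hv' hm']] ->]].
rewrite -mpolyXD; apply: ig_gen; exists (m + m')%MM; split => //.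
have [sr0|srpos] : s + r = 0 \/ 0 < s + r.
  by move: (addr_ge0 hs hr); rewrite le_eqVlt => /orP [/eqP ->|->]; [left|right].
  have s0 : s = 0 by lra.
  have r0 : r = 0 by lra.
  exists v; split => // i; rewrite expvecD hm hm' s0 r0; lra.
exists (fun i => s / (s + r) * v i + (1 - s / (s + r)) * v' i); split.
  apply: conv_comb => //; first by apply: divr_ge0 => //; exact: ltW.
  by rewrite ler_pdivrMr // mul1r; lra.
move=> i; rewrite expvecD hm hm'; field; lra.
Qed.
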